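(* Let $F$ be a non-archimedean local field of characteristic not $2$ with valuation ring $\mathfrak{o}$, $V$ a $2$-dimensional $F$-vector space, and $\ddagger$ an orthogonal involution on $End(V)$ with associated bilinear form $b_\ddagger$. For a lattice $\Lambda\subset V$, the order $End(\Lambda)\cap End(\Lambda^\sharp)$ depends only on $\Lambda$ up to scaling by $F^\times$, so that $$[\Lambda]\mapsto End(\Lambda)\cap End(\Lambda^\sharp)$$ is a well-defined map from lattices in $V$ up to scaling to orders of $End(V)$; its image is exactly the set of orders of the form $\mathcal{O}\cap\mathcal{O}^\ddagger$ with $\mathcal{O}$ a maximal order of $End(V)$.
   Context: $b_\ddagger$ is a nondegenerate symmetric bilinear form on $V$ (unique up to $F^\times$-scaling) with $b_\ddagger(v,\sigma w)=b_\ddagger(\sigma^\ddagger v,w)$ for all $v,w\in V,\sigma\in End(V)$. A lattice in $V$ is a finitely generated $\mathfrak{o}$-submodule spanning $V$. $\Lambda^\sharp=\{v\in V: b_\ddagger(v,\Lambda)\subset\mathfrak{o}\}$ and $End(\Lambda)=\{\sigma\in End(V):\sigma(\Lambda)\subset\Lambda\}$. An order is an $\mathfrak{o}$-lattice in $End(V)$ which is a subring with $1$ spanning $End(V)$; $\mathcal{O}^\ddagger=\{x^\ddagger : x\in\mathcal{O}\}$. *)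

(* Defs.v *)
From HB Require Import structures.
From mathcomp Require Import all_boot all_order all_algebra.
Set Implicit Arguments. Unset Strict Implicit. Unset Printing Implicit Defensive.
Import Order.TTheory GRing.Theory Num.Theory.
Local Open Scope ring_scope.

Section Defs.
Variables (F : fieldType) (v : F -> int).

(* valuation ring o and the ideals p^k (v 0 is irrelevant: 0 is put in by hand) *)
Definition inO (x : F) : Prop := x = 0 \/ (0 <= v x)%R.
Definition inP (k : int) (x : F) : Prop := x = 0 \/ (k <= v x)%R.

Record nonarch_local_field : Prop := {
  v_mul : forall x y, x != 0 -> y != 0 -> v (x * y) = v x + v y;
  v_add : forall x y, x != 0 -> y != 0 -> x + y != 0 ->
            (Num.min (v x) (v y) <= v (x + y))%R;
  v_surj : forall n : int, exists x, x != 0 /\ v x = n;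
  residue_finite : exists s : seq F, forall x, inO x ->
            exists2 y, y \in s & (inO y /\ inP 1 (x - y));
  complete : forall u : nat -> F,
      (forall k : int, exists N, forall m n, (N <= m)%N -> (N <= n)%N -> inP k (u m - u n)) ->
      exists l, forall k : int, exists N, forall n, (N <= n)%N -> inP k (u n - l)
}.

Definition seteq (T : Type) (A B : T -> Prop) := forall x, A x <-> B x.

Definition olattice (M : lmodType F) (L : M -> Prop) : Prop :=
  exists s : seq M,
    (forall x, L x <-> exists c : 'I_(size s) -> F,
                 (forall i, inO (c i)) /\ x = \sum_(i < size s) c i *: s`_i) /\
    (forall x : M, exists c : 'I_(size s) -> F, x = \sum_(i < size s) c i *: s`_i).

(* V = F^2 as column vectors, End(V) = 2x2 matrices acting on the left *)
Definition bform (B : 'M[F]_2) (x y : 'cV[F]_2) : F := (x^T *m B *m y) 0 0.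

Definition dual_lattice (B : 'M[F]_2) (L : 'cV[F]_2 -> Prop) : 'cV[F]_2 -> Prop :=
  fun x => forall w, L w -> inO (bform B x w).

Definition EndL (L : 'cV[F]_2 -> Prop) : 'M[F]_2 -> Prop :=
  fun s => forall x, L x -> L (s *m x).

Definition scale_lattice (c : F) (L : 'cV[F]_2 -> Prop) : 'cV[F]_2 -> Prop :=
  fun x => exists2 y, L y & x = c *: y.

Definition EndInter (B : 'M[F]_2) (L : 'cV[F]_2 -> Prop) : 'M[F]_2 -> Prop :=
  fun s => EndL L s /\ EndL (dual_lattice B L) s.

Definition is_order (O : 'M[F]_2 -> Prop) : Prop :=
  olattice O /\ O 1 /\ (forall x y, O x -> O y -> O (x * y)).

Definition max_order (O : 'M[F]_2 -> Prop) : Prop :=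
  is_order O /\ forall O', is_order O' -> (forall x, O x -> O' x) -> forall x, O' x -> O x.

Definition dagger_set (ddag : 'M[F]_2 -> 'M[F]_2) (O : 'M[F]_2 -> Prop) : 'M[F]_2 -> Prop :=
  fun x => exists2 y, O y & x = ddag y.

End Defs.

(* Main.v *)
Require Import Defs.
From HB Require Import structures.
From mathcomp Require Import all_boot all_order all_algebra.
From mathcomp Require Import zify.
From Stdlib Require Import Classical.
Import Order.TTheory GRing.Theory Num.Theory.
Local Open Scope ring_scope.
Set Implicit Arguments. Unset Strict Implicit. Unset Printing Implicit Defensive.

Section Val.
Variables (F : fieldType) (v : F -> int) (hF : nonarch_local_field v).

Lemma v1 : v 1 = 0.
Proof.
have h : v 1 = v 1 + v 1 by have := v_mul hF (oner_neq0 F) (oner_neq0 F); rewrite mulr1.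
lia.
Qed.

Lemma vinv x : x != 0 -> v x^-1 = - v x.
Proof.
move=> hx; have hi : x^-1 != 0 by rewrite invr_eq0.
have h : 0 = v x + v x^-1 by rewrite -v1 -(mulfV hx); exact: v_mul.
lia.
Qed.

Lemma vN1 : v (-1) = 0.
Proof.
have h : (-1 : F) != 0 by rewrite oppr_eq0 oner_neq0.
have h2 : 0 = v (-1) + v (-1) by rewrite -v1 -(v_mul hF h h) mulrNN mulr1.
lia.
Qed.

Lemma vN x : x != 0 -> v (- x) = v x.
Proof.
move=> hx; have h : (-1 : F) != 0 by rewrite oppr_eq0 oner_neq0.
by rewrite -mulN1r (v_mul hF h hx) vN1 add0r.
Qed.

Lemma inP0 k : inP v k 0. Proof. by left. Qed.

Lemma inP_add k x y : inP v k x -> inP v k y -> inP v k (x + y).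
Proof.
case=> [->|hx]; first by rewrite add0r.
case=> [->|hy]; first by rewrite addr0; right.
have [->|hxy] := eqVneq (x + y) 0; first by left.
have [x0|nx] := eqVneq x 0; first by right; rewrite x0 add0r.
have [y0|ny] := eqVneq y 0; first by right; rewrite y0 addr0.
right; apply: le_trans (v_add hF nx ny hxy); by rewrite le_min hx hy.
Qed.

Lemma inP_mul a b x y : inP v a x -> inP v b y -> inP v (a + b) (x * y).
Proof.
case=> [->|hx]; first by rewrite mul0r; left.
case=> [->|hy]; first by rewrite mulr0; left.
have [x0|nx] := eqVneq x 0; first by rewrite x0 mul0r; left.
have [y0|ny] := eqVneq y 0; first by rewrite y0 mulr0; left.
right; rewrite (v_mul hF nx ny); exact: lerD.
Qed.

Lemma inP_le a b x : a <= b -> inP v b x -> inP v a x.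
Proof. move=> hab [->|h]; [by left|right; exact: le_trans h]. Qed.

Lemma inP_opp k x : inP v k x -> inP v k (- x).
Proof.
case=> [->|h]; first by rewrite oppr0; left.
have [->|nx] := eqVneq x 0; first by rewrite oppr0; left.
by right; rewrite vN.
Qed.

Lemma inP_v x : inP v (v x) x. Proof. by right. Qed.

Lemma inP_ex x : exists k, inP v k x. Proof. by exists (v x); right. Qed.

Lemma inP_nz k x : x != 0 -> inP v k x -> k <= v x.
Proof. by move=> nx [h|//]; rewrite h eqxx in nx. Qed.

Lemma inP_div x y : x != 0 -> inP v (v x) y -> inP v 0 (y / x).
Proof.
move=> nx hy; have := inP_mul hy (inP_v x^-1); rewrite vinv //; by rewrite subrr.
Qed.

Lemma inP_sum k (I : Type) (r : seq I) (P : pred I) (G : I -> F) :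
  (forall i, P i -> inP v k (G i)) -> inP v k (\sum_(i <- r | P i) G i).
Proof. move=> h; apply: big_ind => //; [exact: inP0 | exact: inP_add]. Qed.

Lemma bound_seq (s : seq F) : exists k, forall x, x \in s -> inP v k x.
Proof.
elim: s => [|y s [k hk]]; first by exists 0.
exists (Num.min k (v y)) => x; rewrite inE => /orP[/eqP->|/hk h].
  by apply: inP_le (inP_v y); rewrite ge_min lexx orbT.
by apply: inP_le h; rewrite ge_min lexx.
Qed.

Lemma bound_fin (I : finType) (g : I -> F) : exists k, forall i, inP v k (g i).
Proof.
have [k hk] := bound_seq [seq g i | i <- enum I].
by exists k => i; apply: hk; apply: map_f; rewrite mem_enum.
Qed.

Lemma val_ex (n : int) : exists a : F, a != 0 /\ v a = n.
Proof. exact: (v_surj hF n). Qed.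

Lemma int_min (P : int -> Prop) (b : int) :
  (forall n, P n -> b <= n) -> (exists n, P n) ->
  exists m, P m /\ forall n, P n -> m <= n.
Proof.
move=> hb [n0 hn0]; apply: NNPP => hno.
have key : forall k : nat, forall n, P n -> b + k%:Z <= n.
  elim=> [|k IH] n hn; first by rewrite addr0; exact: hb.
  apply: NNPP => hlt; apply: hno; exists n; split => // n' hn'.
  have := IH n' hn'; have := IH n hn; move: hlt; lia.
have := key (absz (n0 - b)).+1 n0 hn0; have := hb n0 hn0; lia.
Qed.

End Val.

Section Gen.
Variables (F : fieldType) (v : F -> int) (hF : nonarch_local_field v) (M : lmodType F).

Definition ocomb (s : seq M) (x : M) := exists c : 'I_(size s) -> F,
  (forall i, inO v (c i)) /\ x = \sum_(i < size s) c i *: s`_i.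
Definition osub (S : M -> Prop) := S 0 /\ (forall x y, S x -> S y -> S (x + y)) /\
  (forall a x, inP v 0 a -> S x -> S (a *: x)).
Definition islin (f : M -> F) := forall a x y, f (a *: x + y) = a * f x + f y.

Lemma lin0 f : islin f -> f 0 = 0.
Proof. move=> h; have := h 1 0 0; rewrite scale1r addr0 mul1r => e.
by apply: (addrI (f 0)); rewrite addr0 -e. Qed.

Lemma linD f x y : islin f -> f (x + y) = f x + f y.
Proof. by move=> h; rewrite -{1}(scale1r x) h mul1r. Qed.

Lemma linZ f a x : islin f -> f (a *: x) = a * f x.
Proof. by move=> h; rewrite -(addr0 (a *: x)) h lin0 // addr0. Qed.

Lemma linN f x : islin f -> f (- x) = - f x.
Proof. by move=> h; rewrite -scaleN1r linZ // mulN1r. Qed.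

Lemma lin_sum f (I : Type) (r : seq I) (P : pred I) (G : I -> M) : islin f ->
  f (\sum_(i <- r | P i) G i) = \sum_(i <- r | P i) f (G i).
Proof. move=> h; apply: (big_morph f) => [x y|]; [exact: linD | exact: lin0]. Qed.

Lemma osub_sum S (I : Type) (r : seq I) (P : pred I) (G : I -> M) : osub S ->
  (forall i, P i -> S (G i)) -> S (\sum_(i <- r | P i) G i).
Proof. by case=> h0 [hD _] h; apply: big_ind. Qed.

Lemma osub_opp S x : osub S -> S x -> S (- x).
Proof. case=> _ [_ hZ] hx; rewrite -scaleN1r; apply: hZ hx; apply: inP_opp => //.
by right; rewrite (v1 hF). Qed.

Lemma ocomb_osub s : osub (ocomb s).
Proof.
split; [|split].
- exists (fun _ => 0); split => [i|]; first by left.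
  by rewrite big1 // => i _; rewrite scale0r.
- move=> x y [c [hc ->]] [d [hd ->]]; exists (fun i => c i + d i); split.
    by move=> i; exact: (inP_add hF (k:=0) (hc i) (hd i)).
  by rewrite -big_split /=; apply: eq_bigr => i _; rewrite scalerDl.
- move=> a x ha [c [hc ->]]; exists (fun i => a * c i); split.
    by move=> i; have := inP_mul hF (b:=0) ha (hc i); rewrite addr0.
  by rewrite scaler_sumr; apply: eq_bigr => i _; rewrite scalerA.
Qed.

Lemma ocomb_gen s i : ocomb s s`_i.
Proof.
case: (ltnP i (size s)) => hi; last first.
  rewrite nth_default //; exists (fun _ => 0); split => [j|]; first by left.
  by rewrite big1 // => j _; rewrite scale0r.
exists (fun j : 'I_(size s) => if (j : nat) == i then 1 else 0); split.
  by move=> j; case: ifP => _; [right; rewrite (v1 hF) | left].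
rewrite (bigD1 (Ordinal hi)) //= eqxx scale1r big1 ?addr0 // => j hj.
by rewrite ifN ?scale0r //; apply: contra hj => /eqP e; apply/eqP; exact: val_inj.
Qed.


Lemma fg (fs : seq (M -> F)) : forall S, (forall f, List.In f fs -> islin f) -> osub S ->
  (forall x, S x -> (forall f, List.In f fs -> f x = 0) -> x = 0) ->
  (exists k, forall x, S x -> forall f, List.In f fs -> inP v k (f x)) ->
  exists s, forall x, S x <-> ocomb s x.
Proof.
elim: fs => [|f fs IH] S hlin hS hinj [k hk].
  exists [::] => x; split => [hx|[c [_ ->]]]; last by rewrite big_ord0; case: hS.
  rewrite (hinj x hx) //; exists (fun _ => 0); split => [i|]; [by left|by rewrite big_ord0].
have hf : islin f by apply: hlin; left.
pose S' x := S x /\ f x = 0.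
have hS' : osub S'.
  case: hS => h0 [hD hZ]; split; [|split].
  - by split => //; exact: lin0.
  - by move=> x y [hx ex] [hy ey]; split; [exact: hD|rewrite linD // ex ey addr0].
  - by move=> a x ha [hx ex]; split; [exact: hZ|rewrite linZ // ex mulr0].
have [t ht] : exists t, forall x, S' x <-> ocomb t x.
  apply: IH => //.
  - by move=> g hg; apply: hlin; right.
  - move=> x [hx ex] h; apply: hinj => // g [<-|hg] //; exact: h.
  - by exists k => x [hx _] g hg; apply: hk => //; right.
case: (classic (exists x, S x /\ f x != 0)) => [hex|hno]; last first.
  exists t => x; rewrite -ht; split => [hx|[]//]; split => //.
  by case: (eqVneq (f x) 0) => // nx; exfalso; apply: hno; exists x.
have [m [[x0 [hx0 [nf0 vx0]]] hmin]] :
  exists m, (exists x, S x /\ f x != 0 /\ v (f x) = m) /\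
    forall n, (exists x, S x /\ f x != 0 /\ v (f x) = n) -> m <= n.
  apply: (int_min (b := k)).
    by move=> n [x [hx [nx <-]]]; apply: inP_nz nx (hk x hx f _); left.
  by case: hex => x [hx nx]; exists (v (f x)), x.
exists (x0 :: t) => x; split.
- move=> hx; set a := f x / f x0.
  have ha : inP v 0 a.
    rewrite /a; apply: inP_div => //.
    have [->|nx] := eqVneq (f x) 0; first by left.
    by right; rewrite vx0; apply: hmin; exists x.
  have hy : S' (x + (- a) *: x0).
    case: hS => _ [hD hZ]; split.
      by apply: hD => //; apply: hZ => //; exact: inP_opp.
    by rewrite linD // linZ // /a mulNr divfK // subrr.
  have [c [hc ec]] := (ht _).1 hy.
  exists (fun i : 'I_(size t).+1 => if unlift ord0 i is Some j then c j else a).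
  split; first by move=> i; case: (unlift ord0 i).
  rewrite big_ord_recl /= unlift_none.
  have -> : x = a *: x0 + (x + (- a) *: x0) by rewrite scaleNr addrCA subrr addr0.
  rewrite ec; congr (_ + _); apply: eq_bigr => i _; by rewrite liftK.
- move=> [c [hc ->]]; rewrite big_ord_recl; case: hS => h0 [hD hZ].
  apply: hD. apply: hZ. exact: hc. simpl. exact: hx0.
  have : S' (\sum_(i < size t) c (lift ord0 i) *: t`_i).
    by apply/ht; exists (fun i => c (lift ord0 i)); split.
  by case.
Qed.

Definition bnd (fs : seq (M -> F)) (S : M -> Prop) :=
  exists k, forall x, S x -> forall f, List.In f fs -> inP v k (f x).
Definition absorb (S : M -> Prop) := forall x, exists a, a != 0 /\ S (a *: x).

Lemma inP_min_l a b x : inP v a x -> inP v (Num.min a b) x.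
Proof. by apply: inP_le; rewrite ge_min lexx. Qed.
Lemma inP_min_r a b x : inP v b x -> inP v (Num.min a b) x.
Proof. by apply: inP_le; rewrite ge_min lexx orbT. Qed.

Lemma olat_nice (fs : seq (M -> F)) : (forall f, List.In f fs -> islin f) ->
  (forall x, (forall f, List.In f fs -> f x = 0) -> x = 0) ->
  forall S, olattice v S <-> osub S /\ bnd fs S /\ absorb S.
Proof.
move=> hlin hinj S; split.
- case=> s [hs hsp].
  have hSo : osub S.
    have [h0 [hD hZ]] := ocomb_osub s.
    split; [|split].
    + exact/hs.
    + by move=> x y /hs hx /hs hy; apply/hs; apply: hD.
    + by move=> a x ha /hs hx; apply/hs; apply: hZ.
  split => //; split.
  + have [k hk] : exists k, forall f, List.In f fs -> forall i : 'I_(size s), inP v k (f s`_i).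
      elim: fs hlin {hinj} => [|g fs IH] hl; first by exists 0.
      have [k1 hk1] := IH (fun f hf => hl f (or_intror hf)).
      have [k2 hk2] := bound_fin v (fun i : 'I_(size s) => g s`_i).
      exists (Num.min k1 k2) => f [<-|hf] i; first exact: inP_min_r.
      exact: inP_min_l (hk1 f hf i).
    exists k => x /hs [c [hc ->]] f hf; rewrite lin_sum; last exact: hlin.
    apply: (inP_sum hF) => i _; rewrite linZ; last exact: hlin.
    by rewrite -(add0r k); exact: (inP_mul hF (a:=0) (hc i) (hk f hf i)).
  + move=> x; have [c ->] := hsp x; have [k hk] := bound_fin v c.
    have [a [na va]] := val_ex hF (- k); exists a; split => //.
    apply/hs; exists (fun i => a * c i); split.
      by move=> i; have := inP_mul hF (inP_v v a) (hk i); rewrite va addNr.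
    by rewrite scaler_sumr; apply: eq_bigr => i _; rewrite scalerA.
- case=> hSo [hb ha].
  have [s hs] := fg hlin hSo (fun x _ h => hinj x h) hb.
  exists s; split => // x; have [a [na /hs [c [hc e]]]] := ha x.
  exists (fun i => a^-1 * c i).
  have -> : x = a^-1 *: (a *: x) by rewrite scalerA mulVf // scale1r.
  by rewrite e scaler_sumr; apply: eq_bigr => i _; rewrite scalerA.
Qed.

Lemma olat_ext (S T : M -> Prop) : seteq S T -> olattice v S -> olattice v T.
Proof.
move=> e [s [hs hsp]]; exists s; split => // x; rewrite -e; exact: hs.
Qed.
End Gen.

Section Mx.
Variables (F : fieldType) (v : F -> int) (hF : nonarch_local_field v).

Definition mo k m n (A : 'M[F]_(m, n)) := forall i j, inP v k (A i j).

Lemma mo_ex m n (A : 'M[F]_(m, n)) : exists k, mo k A.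
Proof.
have [k hk] := bound_fin v (fun p : 'I_m * 'I_n => A p.1 p.2).
by exists k => i j; exact: (hk (i, j)).
Qed.

Lemma mo_le a b m n (A : 'M[F]_(m, n)) : a <= b -> mo b A -> mo a A.
Proof. by move=> hab h i j; apply: inP_le hab (h i j). Qed.

Lemma mo_add k m n (A B : 'M[F]_(m, n)) : mo k A -> mo k B -> mo k (A + B).
Proof. by move=> hA hB i j; rewrite mxE; apply: inP_add. Qed.

Lemma mo_opp k m n (A : 'M[F]_(m, n)) : mo k A -> mo k (- A).
Proof. by move=> hA i j; rewrite mxE; apply: inP_opp. Qed.

Lemma mo0 k m n : mo k (0 : 'M[F]_(m, n)).
Proof. by move=> i j; rewrite mxE; left. Qed.

Lemma mo_scale a b c m n (A : 'M[F]_(m, n)) : inP v a c -> mo b A -> mo (a + b) (c *: A).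
Proof. by move=> hc hA i j; rewrite mxE; apply: inP_mul. Qed.

Lemma mo_mul a b m n p (A : 'M[F]_(m, n)) (B : 'M[F]_(n, p)) :
  mo a A -> mo b B -> mo (a + b) (A *m B).
Proof.
move=> hA hB i j; rewrite mxE; apply: (inP_sum hF) => k _; exact: inP_mul.
Qed.

Lemma mo_mul0 m n p (A : 'M[F]_(m, n)) (B : 'M[F]_(n, p)) :
  mo 0 A -> mo 0 B -> mo 0 (A *m B).
Proof. by move=> hA hB; have := mo_mul hA hB; rewrite addr0. Qed.

Lemma mo1 n : mo 0 (1%:M : 'M[F]_n).
Proof. by move=> i j; rewrite mxE; case: (i == j); [right; rewrite (v1 hF)|left]. Qed.

Lemma mo_tr k m n (A : 'M[F]_(m, n)) : mo k A^T <-> mo k A.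
Proof. by split => h i j; [have := h j i|]; rewrite ?mxE. Qed.

Lemma mo_div c m n (A : 'M[F]_(m, n)) : c != 0 -> mo (v c) A -> mo 0 (c^-1 *: A).
Proof. by move=> nc h i j; rewrite mxE mulrC; apply: inP_div. Qed.

Lemma ord2 (i : 'I_2) : i = 0 \/ i = 1.
Proof. by case: i => [[|[|i]] hi]; [left|right|]; try apply: val_inj. Qed.

Lemma col_delta m n (A : 'M[F]_(m, n)) i j : (A *m (delta_mx j 0 : 'M_(n, 1))) i 0 = A i j.
Proof. by rewrite -colE mxE. Qed.

Lemma mo_delta m n (i : 'I_m) (j : 'I_n) : mo 0 (delta_mx i j : 'M[F]_(m, n)).
Proof. by move=> a b; rewrite mxE; case: (_ && _); [right; rewrite (v1 hF)|left]. Qed.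

Lemma invmxM n (A B : 'M[F]_n) : A \in unitmx -> B \in unitmx ->
  invmx (A *m B) = invmx B *m invmx A.
Proof.
move=> hA hB; have hAB : A *m B \in unitmx by rewrite unitmx_mul hA hB.
have e : (A *m B) *m (invmx B *m invmx A) = 1%:M.
  by rewrite mulmxA -(mulmxA A) mulmxV // mulmx1 mulmxV.
by rewrite -[RHS](mulKmx hAB) e mulmx1.
Qed.

Definition fsV : seq ('cV[F]_2 -> F) := [:: (fun x : 'cV[F]_2 => x 0 0); (fun x : 'cV[F]_2 => x 1 0)].
Definition fsM : seq ('M[F]_2 -> F) :=
  [:: (fun x : 'M[F]_2 => x 0 0); (fun x : 'M[F]_2 => x 0 1);
      (fun x : 'M[F]_2 => x 1 0); (fun x : 'M[F]_2 => x 1 1)].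

Lemma fsV_lin f : List.In f fsV -> islin f.
Proof. by case=> [<-|[<-|[]]] a x y; rewrite !mxE. Qed.
Lemma fsM_lin f : List.In f fsM -> islin f.
Proof. by case=> [<-|[<-|[<-|[<-|[]]]]] a x y; rewrite !mxE. Qed.

Lemma fsV_inj x : (forall f, List.In f fsV -> f x = 0) -> x = 0.
Proof.
move=> h; apply/matrixP => i j; rewrite mxE; have -> : j = 0 by apply: val_inj; case: j => [[]].
case: (ord2 i) => ->; [exact: (h _ (or_introl erefl))|exact: (h _ (or_intror (or_introl erefl)))].
Qed.

Lemma fsM_inj x : (forall f, List.In f fsM -> f x = 0) -> x = 0.
Proof.
move=> h; apply/matrixP => i j; rewrite mxE.
case: (ord2 i) => ->; case: (ord2 j) => ->; apply: (h (fun x => x _ _)); rewrite /=; tauto.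
Qed.

Lemma bndV (S : 'cV[F]_2 -> Prop) : bnd v fsV S <-> exists k, forall x, S x -> mo k x.
Proof.
split=> [[k hk]|[k hk]]; exists k => x hx.
  move=> i j; have -> : j = 0 by apply: val_inj; case: j => [[]].
  case: (ord2 i) => ->; apply: (hk x hx (fun x => x _ _)); rewrite /=; tauto.
by move=> f [<-|[<-|[]]]; apply: hk.
Qed.

Lemma bndM (S : 'M[F]_2 -> Prop) : bnd v fsM S <-> exists k, forall x, S x -> mo k x.
Proof.
split=> [[k hk]|[k hk]]; exists k => x hx.
  move=> i j; case: (ord2 i) => ->; case: (ord2 j) => ->;
    apply: (hk x hx (fun x => x _ _)); rewrite /=; tauto.
by move=> f [<-|[<-|[<-|[<-|[]]]]]; apply: hk.
Qed.

Lemma olatV (S : 'cV[F]_2 -> Prop) :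
  olattice v S <-> osub v S /\ (exists k, forall x, S x -> mo k x) /\ absorb S.
Proof. rewrite -bndV; exact: (olat_nice hF fsV_lin fsV_inj). Qed.

Lemma olatM (S : 'M[F]_2 -> Prop) :
  olattice v S <-> osub v S /\ (exists k, forall x, S x -> mo k x) /\ absorb S.
Proof. rewrite -bndM; exact: (olat_nice hF fsM_lin fsM_inj). Qed.

End Mx.

Section Lat.
Variables (F : fieldType) (v : F -> int) (hF : nonarch_local_field v).

Definition LP (P : 'M[F]_2) (x : 'cV[F]_2) := mo v 0 (invmx P *m x).
Definition EndP (P : 'M[F]_2) (s : 'M[F]_2) := mo v 0 (invmx P *m s *m P).

Lemma LP_olat P : P \in unitmx -> olattice v (LP P).
Proof.
move=> hP; apply/(olatV hF); split; [|split].
- split; [|split].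
  + by rewrite /LP mulmx0; exact: (mo0 v).
  + by move=> x y hx hy; rewrite /LP mulmxDr; apply: (mo_add hF).
  + move=> a x ha hx; rewrite /LP -scalemxAr; have := mo_scale hF ha hx; by rewrite addr0.
- have [k hk] := mo_ex v P; exists k => x hx.
  have e : x = P *m (invmx P *m x) by rewrite mulKVmx.
  by rewrite e -(addr0 k); apply: (mo_mul hF) hk hx.
- move=> x; have [k hk] := mo_ex v (invmx P *m x).
  have [a [na va]] := val_ex hF (- k); exists a; split => //.
  rewrite /LP -scalemxAr; have := mo_scale hF (inP_v v a) hk; by rewrite va addNr.
Qed.

Lemma EndL_LP P s : P \in unitmx -> EndL (LP P) s <-> EndP P s.
Proof.
move=> hP; split => h.
- move=> i j; have hx : LP P (P *m (delta_mx j 0 : 'cV[F]_2)).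
    by rewrite /LP mulKmx //; exact: (mo_delta hF).
  by have := h _ hx i 0; rewrite -(col_delta (invmx P *m s *m P)) !mulmxA.
- move=> x hx; rewrite /LP.
  have -> : invmx P *m (s *m x) = (invmx P *m s *m P) *m (invmx P *m x).
    by rewrite -!mulmxA (mulKVmx hP).
  exact: (mo_mul0 hF).
Qed.

Lemma EndP_unit P : P \in unitmx -> EndP P 1%:M.
Proof. by move=> hP; rewrite /EndP mulmx1 mulVmx //; exact: (mo1 hF). Qed.

Lemma EndP_mul P s t : P \in unitmx -> EndP P s -> EndP P t -> EndP P (s *m t).
Proof.
move=> hP hs ht; rewrite /EndP.
have -> : invmx P *m (s *m t) *m P = (invmx P *m s *m P) *m (invmx P *m t *m P).
  by rewrite !mulmxA (mulmxK hP).
exact: (mo_mul0 hF).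
Qed.

Lemma EndP_osub P : osub v (EndP P).
Proof.
split; [|split].
- by rewrite /EndP mulmx0 mul0mx; exact: (mo0 v).
- by move=> x y hx hy; rewrite /EndP mulmxDr mulmxDl; apply: (mo_add hF).
- move=> a x ha hx; rewrite /EndP -scalemxAr -scalemxAl.
  have := mo_scale hF ha hx; by rewrite addr0.
Qed.

Lemma EndP_bnd P : P \in unitmx -> exists k, forall s, EndP P s -> mo v k s.
Proof.
move=> hP; have [k1 hk1] := mo_ex v P; have [k2 hk2] := mo_ex v (invmx P).
exists (k1 + k2) => s hs.
have e : s = P *m (invmx P *m s *m P) *m invmx P.
  by rewrite !mulmxA (mulmxK hP) mulmxV // mul1mx.
rewrite e -(addr0 k1); apply: (mo_mul hF) => //; exact: (mo_mul hF).
Qed.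

Lemma EndP_abs P s : P \in unitmx -> exists k, forall a, inP v k a -> EndP P (a *: s).
Proof.
move=> hP; have [k hk] := mo_ex v (invmx P *m s *m P); exists (- k) => a ha.
rewrite /EndP -scalemxAr -scalemxAl; have := mo_scale hF ha hk; by rewrite addNr.
Qed.

End Lat.

Section Dual.
Variables (F : fieldType) (v : F -> int) (hF : nonarch_local_field v).
Variables (B : 'M[F]_2) (hBsym : B^T = B) (hBnd : B \in unitmx).

Lemma bform_eq P x w : P \in unitmx ->
  bform B x w = ((P^T *m B *m x)^T *m (invmx P *m w)) 0 0.
Proof.
move=> hP; rewrite /bform !trmx_mul trmxK hBsym !mulmxA (mulmxK hP); done.
Qed.

Lemma dual_LP P : P \in unitmx ->
  seteq (dual_lattice v B (LP v P)) (LP v (invmx (P^T *m B))).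
Proof.
move=> hP x; rewrite /LP invmxK; split => h.
- move=> i j; have -> : j = 0 by apply: val_inj; case: j => [[]].
  have hw : LP v P (P *m (delta_mx i 0 : 'cV[F]_2)).
    by rewrite /LP mulKmx //; exact: (mo_delta hF).
  have := h _ hw; rewrite (bform_eq _ _ hP) mulKmx // col_delta mxE; done.
- move=> w hw; rewrite (bform_eq _ _ hP).
  have := mo_mul0 hF (proj2 (mo_tr v 0 _) h) hw; apply.
Qed.

Lemma bform_mx (A : 'M[F]_2) i j :
  bform A (delta_mx i 0) (delta_mx j 0) = A i j.
Proof. by rewrite /bform trmx_delta -rowE -colE !mxE. Qed.

Variable (ddag : 'M[F]_2 -> 'M[F]_2).
Hypothesis hdag : forall (s : 'M[F]_2) (x y : 'cV[F]_2),
            bform B x (s *m y) = bform B (ddag s *m x) y.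

Lemma ddagE s : ddag s = invmx B *m s^T *m B.
Proof.
have e1 : B *m s = (ddag s)^T *m B.
  apply/matrixP => i j; rewrite -bform_mx -[RHS]bform_mx.
  have := hdag s (delta_mx i 0) (delta_mx j 0).
  by rewrite /bform !mulmxA trmx_mul.
have e2 : B *m ddag s = s^T *m B.
  by have := congr1 trmx e1; rewrite !trmx_mul trmxK hBsym.
by rewrite -mulmxA -e2 mulKmx.
Qed.

Lemma ddagK s : ddag (ddag s) = s.
Proof.
rewrite !ddagE !trmx_mul trmxK hBsym trmx_inv hBsym !mulmxA mulVmx // mul1mx.
by rewrite mulmxKV.
Qed.

Lemma EndP_ddag P s : P \in unitmx ->
  EndP v P (ddag s) <-> EndP v (invmx (P^T *m B)) s.
Proof.
move=> hP; rewrite /EndP invmxK invmxM ?unitmx_tr // ddagE -mo_tr.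
have -> : (invmx P *m (invmx B *m s^T *m B) *m P)^T =
          P^T *m B *m s *m (invmx B *m invmx P^T).
  by rewrite !trmx_mul trmxK hBsym !trmx_inv hBsym !mulmxA.
done.
Qed.

End Dual.

Section Basis.
Variables (F : fieldType) (v : F -> int) (hF : nonarch_local_field v).

Lemma cV2_eq (x y : 'cV[F]_2) : x 0 0 = y 0 0 -> x 1 0 = y 1 0 -> x = y.
Proof.
move=> h0 h1; apply/matrixP => i j; have -> : j = 0 by apply: val_inj; case: j => [[]].
by case: (ord2 i) => ->.
Qed.

Lemma mul2 (P : 'M[F]_2) (y : 'cV[F]_2) :
  P *m y = y 0 0 *: col 0 P + y 1 0 *: col 1 P.
Proof.
apply/matrixP => i j; rewrite !mxE !big_ord_recl big_ord0 addr0 ?mxE.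
have e0 : (ord0 : 'I_2) = 0 by apply: val_inj.
have e1 : (lift ord0 ord0 : 'I_2) = 1 by apply: val_inj.
have -> : j = 0 by apply: val_inj; case: j => [[]].
by rewrite e0 e1 (mulrC (y _ _)) (mulrC (y _ _)).
Qed.

Lemma basis (L : 'cV[F]_2 -> Prop) : osub v L -> (exists k, forall x, L x -> mo v k x) ->
  absorb L -> exists P, P \in unitmx /\ seteq L (LP v P).
Proof.
move=> hL [k hk] habs; have [h0 [hD hZ]] := hL.
have [m1 [[l1 [hl1 [nl1 vl1]]] hmin1]] :
  exists m, (exists x, L x /\ x 0 0 != 0 /\ v (x 0 0) = m) /\
    forall n, (exists x, L x /\ x 0 0 != 0 /\ v (x 0 0) = n) -> m <= n.
  apply: (int_min (b := k)).
    by move=> n [x [hx [nx <-]]]; apply: inP_nz nx (hk x hx 0 0).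
  have [a [na ha]] := habs (delta_mx 0 0).
  by exists (v ((a *: delta_mx 0 0 : 'cV[F]_2) 0 0)), (a *: delta_mx 0 0); rewrite !mxE /= mulr1.
have [m2 [[l2 [hl2 [z2 [nl2 vl2]]]] hmin2]] :
  exists m, (exists x, L x /\ x 0 0 = 0 /\ x 1 0 != 0 /\ v (x 1 0) = m) /\
    forall n, (exists x, L x /\ x 0 0 = 0 /\ x 1 0 != 0 /\ v (x 1 0) = n) -> m <= n.
  apply: (int_min (b := k)).
    by move=> n [x [hx [_ [nx <-]]]]; apply: inP_nz nx (hk x hx 1 0).
  have [a [na ha]] := habs (delta_mx 1 0).
  by exists (v ((a *: delta_mx 1 0 : 'cV[F]_2) 1 0)), (a *: delta_mx 1 0); rewrite !mxE /= mulr1 mulr0.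
pose P : 'M[F]_2 := \matrix_(i, j) (if j == 0 then l1 i 0 else l2 i 0).
have c0 : col 0 P = l1 by apply/matrixP => i j; rewrite !mxE /= ; have -> : j = 0 by apply: val_inj; case: j => [[]].
have c1 : col 1 P = l2 by apply/matrixP => i j; rewrite !mxE /= ; have -> : j = 0 by apply: val_inj; case: j => [[]].
have hP : P \in unitmx.
  have ht : is_trig_mx P.
    apply/forallP => i; apply/forallP => j; apply/implyP => hij.
    case: (ord2 i) hij => -> ; case: (ord2 j) => -> //= _.
    by rewrite mxE /= z2.
  rewrite unitmxE (det_trig ht) !big_ord_recl big_ord0 mulr1 unitfE !mxE /=.
  have e0 : (ord0 : 'I_2) = 0 by apply: val_inj.
  have e1 : (lift ord0 ord0 : 'I_2) = 1 by apply: val_inj.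
  by rewrite e0 e1 mulf_neq0.
exists P; split => // x; split => hx.
- set a := x 0 0 / l1 0 0.
  have ha : inP v 0 a.
    apply: inP_div => //; have [->|nx] := eqVneq (x 0 0) 0; first by left.
    by right; rewrite vl1; apply: hmin1; exists x.
  pose x' := x + (- a) *: l1.
  have hx' : L x' by apply: hD => //; apply: hZ => //; exact: inP_opp.
  have x'0 : x' 0 0 = 0 by rewrite !mxE mulNr divfK // subrr.
  set b := x' 1 0 / l2 1 0.
  have hb : inP v 0 b.
    apply: inP_div => //; have [->|nx] := eqVneq (x' 1 0) 0; first by left.
    by right; rewrite vl2; apply: hmin2; exists x'.
  pose y : 'cV[F]_2 := \col_i (if i == 0 then a else b).
  have ex : x = P *m y.
    rewrite mul2 c0 c1 !mxE /=.
    have z2' : l2 0 0 = 0 := z2.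
    apply: cV2_eq; rewrite !mxE.
      by rewrite z2' mulr0 addr0 /a divfK.
    have : x' 1 0 = b * l2 1 0 by rewrite /b divfK.
    rewrite /x' !mxE => e; rewrite -e; by rewrite mulNr addrCA subrr addr0.
  rewrite /LP ex mulKmx // => i j; rewrite !mxE.
  by case: (ord2 i) => ->.
- have ex : x = P *m (invmx P *m x) by rewrite mulKVmx.
  rewrite ex mul2 c0 c1; apply: hD; apply: hZ => //; exact: hx.
Qed.

End Basis.

Section MaxOrd.
Variables (F : fieldType) (v : F -> int) (hF : nonarch_local_field v).

Lemma EndP_order P : P \in unitmx -> is_order v (EndP v P).
Proof.
move=> hP; split; [|split].
- apply/(olatM hF); split; [exact: EndP_osub|split; first exact: EndP_bnd].
  move=> s; have [k hk] := EndP_abs hF s hP.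
  have [a [na va]] := val_ex hF k; exists a; split => //; apply: hk; right; by rewrite va.
- exact: EndP_unit.
- move=> x y; exact: EndP_mul.
Qed.

Lemma order_bnd (O : 'M[F]_2 -> Prop) : is_order v O -> exists k, forall s, O s -> mo v k s.
Proof. by case=> /(olatM hF) [_ [h _]] _. Qed.

Lemma EndP_max P : P \in unitmx -> max_order v (EndP v P).
Proof.
move=> hP; split; first exact: EndP_order.
move=> O' hO' hsub.
have [k0 hk0] := order_bnd hO'.
have [_ [hO1 hOM]] := hO'.
pose N (y : 'cV[F]_2) := forall s, O' s -> mo v 0 (invmx P *m s *m P *m y).
have Na : forall y, N y -> mo v 0 y.
  move=> y hy; have := hy 1 hO1; by rewrite mulmx1 mulVmx // mul1mx.
have Nb : forall s0 y, O' s0 -> N y -> N ((invmx P *m s0 *m P) *m y).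
  move=> s0 y hs0 hy s hs; have := hy _ (hOM _ _ hs hs0).
  by rewrite !mulmxA (mulmxK hP).
have Nc : forall (a : 'M[F]_2) y, mo v 0 a -> N y -> N (a *m y).
  move=> a y ha hy.
  have e : a = invmx P *m (P *m a *m invmx P) *m P by rewrite !mulmxA mulVmx // mul1mx mulmxKV.
  rewrite e; apply: Nb => //; apply: hsub; rewrite /EndP -e; exact: ha.
have [kP hkP] := mo_ex v P; have [kQ hkQ] := mo_ex v (invmx P).
have [c0 [nc0 vc0]] := val_ex hF (- (kQ + (k0 + kP))).
have hN0 : N (c0 *: delta_mx 0 0).
  move=> s hs; rewrite -scalemxAr.
  have h1 := mo_mul hF (mo_mul hF (mo_mul hF hkQ (hk0 s hs)) hkP) (mo_delta hF (0 : 'I_2) (0 : 'I_1)).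
  have h2 := mo_scale hF (inP_v v c0) h1.
  apply: (mo_le _ h2); rewrite vc0; lia.
have [m [[y [hy [i [nyi vyi]]]] hmin]] :
  exists m, (exists y, N y /\ exists i, y i 0 != 0 /\ v (y i 0) = m) /\
    forall n, (exists y, N y /\ exists i, y i 0 != 0 /\ v (y i 0) = n) -> m <= n.
  apply: (int_min (b := 0)).
    by move=> n [y [hy [i [nyi <-]]]]; apply: inP_nz nyi (Na y hy i 0).
  exists (v ((c0 *: delta_mx 0 0 : 'cV[F]_2) 0 0)), (c0 *: delta_mx 0 0); split => //.
  by exists 0; split => //; rewrite !mxE /= mulr1.
set c := y i 0.
have Nz : forall z : 'cV[F]_2, mo v 0 z -> N (c *: z).
  move=> z hz; have -> : c *: z = (z *m delta_mx 0 i) *m y.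
    apply/matrixP => r q; rewrite -mulmxA -rowE !mxE big_ord1 !mxE.
    have -> : q = 0 by apply: val_inj; case: q => [[]].
    by rewrite mulrC.
  by apply: Nc => //; apply: (mo_mul0 hF) => //; exact: (mo_delta hF).
have Nv : forall w, N w -> forall j, inP v (v c) (w j 0).
  move=> w hw j; have [->|nw] := eqVneq (w j 0) 0; first by left.
  by right; rewrite /c vyi; apply: hmin; exists w; split => //; exists j.
move=> s hs a b.
have hb := Nz _ (mo_delta hF b (0 : 'I_1)).
have := Nv _ (Nb _ _ hs hb) a.
rewrite -scalemxAr mxE col_delta => h.
have := inP_div hF nyi h; by rewrite /c mulrC mulKf.
Qed.

End MaxOrd.

Section Final.
Variables (F : fieldType) (v : F -> int) (hF : nonarch_local_field v).
Variable (B : 'M[F]_2).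

Lemma bformZr c x y : bform B x (c *: y) = c * bform B x y.
Proof. by rewrite /bform -scalemxAr mxE. Qed.
Lemma bformZl c x y : bform B (c *: x) y = c * bform B x y.
Proof.
rewrite /bform; have -> : (c *: x)^T = c *: x^T by apply/matrixP => i j; rewrite !mxE.
by rewrite -!scalemxAl mxE.
Qed.

Lemma EndL_ext (L L' : 'cV[F]_2 -> Prop) : seteq L L' -> seteq (EndL L) (EndL L').
Proof. by move=> e s; split => h x /e /h /e. Qed.

Lemma dual_ext (L L' : 'cV[F]_2 -> Prop) : seteq L L' ->
  seteq (dual_lattice v B L) (dual_lattice v B L').
Proof. by move=> e x; split => h w /e /h. Qed.

Lemma EndL_scale c (L : 'cV[F]_2 -> Prop) : c != 0 -> seteq (EndL (scale_lattice c L)) (EndL L).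
Proof.
move=> nc s; split => h x.
- move=> hx; have [y hy e] := h (c *: x) (ex_intro2 _ _ x hx erefl).
  have -> : s *m x = y by apply: (scalerI nc); rewrite scalemxAr.
  exact: hy.
- case=> y hy ->; exists (s *m y); [exact: h|by rewrite scalemxAr].
Qed.

Lemma dual_scale c (L : 'cV[F]_2 -> Prop) : c != 0 ->
  seteq (dual_lattice v B (scale_lattice c L)) (scale_lattice c^-1 (dual_lattice v B L)).
Proof.
move=> nc x; split => h.
- exists (c *: x); last by rewrite scalerA mulVf // scale1r.
  by move=> w hw; rewrite bformZl -bformZr; apply: h; exists w.
- case: h => y hy ->; move=> w [z hz ->].
  by rewrite bformZl bformZr mulrA mulVf // mul1r; apply: hy.
Qed.

Lemma part2 (L : 'cV[F]_2 -> Prop) c : c != 0 ->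
  seteq (EndInter v B (scale_lattice c L)) (EndInter v B L).
Proof.
move=> nc s; rewrite /EndInter.
have e1 := EndL_scale L nc s.
have e2 := EndL_ext (dual_scale L nc) s.
have e3 := EndL_scale (dual_lattice v B L) (invr_neq0 nc) s.
tauto.
Qed.

Lemma is_order_ext (O O' : 'M[F]_2 -> Prop) : seteq O O' -> is_order v O -> is_order v O'.
Proof.
move=> e [hl [h1 hm]]; split; first exact: olat_ext e hl.
split; [exact/e|by move=> x y /e hx /e hy; apply/e; apply: hm].
Qed.

End Final.


Theorem lemma5p3 (F : fieldType) (v : F -> int)
  (hF : nonarch_local_field v) (hchar : (2%:R : F) != 0)
  (B : 'M[F]_2) (hBsym : B^T = B) (hBnd : B \in unitmx)
  (ddag : 'M[F]_2 -> 'M[F]_2)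
  (hdag : forall (s : 'M[F]_2) (x y : 'cV[F]_2),
            bform B x (s *m y) = bform B (ddag s *m x) y) :
  (forall L, olattice v L -> is_order v (EndInter v B L)) /\
  (forall L (c : F), olattice v L -> c != 0 ->
     seteq (EndInter v B (scale_lattice c L)) (EndInter v B L)) /\
  (forall O' : 'M[F]_2 -> Prop,
     (exists L, olattice v L /\ seteq O' (EndInter v B L)) <->
     (exists O, max_order v O /\ seteq O' (fun x => O x /\ dagger_set ddag O x))).
Proof.
pose Q (P : 'M[F]_2) := invmx (P^T *m B).
have hQ : forall P, P \in unitmx -> Q P \in unitmx.
  by move=> P hP; rewrite /Q unitmx_inv unitmx_mul unitmx_tr hP.
have EI : forall P, P \in unitmx ->
    seteq (EndInter v B (LP v P)) (fun s => EndP v P s /\ EndP v (Q P) s).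
  move=> P hP s; rewrite /EndInter.
  have e1 := EndL_LP hF s hP.
  have e2 := EndL_ext (dual_LP hF hBsym hP) s.
  have e3 := EndL_LP hF s (hQ P hP).
  rewrite /Q in e3 *; tauto.
have EIext : forall L L', seteq L L' -> seteq (EndInter v B L) (EndInter v B L').
  move=> L L' e s; rewrite /EndInter.
  have e1 := EndL_ext e s; have e2 := EndL_ext (dual_ext v B e) s; tauto.
have hbas : forall L, olattice v L -> exists P, P \in unitmx /\ seteq L (LP v P).
  by move=> L /(olatV hF) [h1 [h2 h3]]; apply: (basis hF).
have ord2P : forall P, P \in unitmx -> is_order v (fun s => EndP v P s /\ EndP v (Q P) s).
  move=> P hP; have hQP := hQ P hP; split; [|split].
  - apply/(olatM hF); split; [|split].
    + have [a1 [a2 a3]] := EndP_osub hF P; have [b1 [b2 b3]] := EndP_osub hF (Q P).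
      split; [by split|split].
      * by move=> x y [] ? ? [] ? ?; split; [apply: a2|apply: b2].
      * by move=> a x ha [] ? ?; split; [apply: a3|apply: b3].
    + by have [k hk] := EndP_bnd hF hP; exists k => s [hs _]; apply: hk.
    + move=> s; have [k1 hk1] := EndP_abs hF s hP; have [k2 hk2] := EndP_abs hF s hQP.
      have [a [na va]] := val_ex hF (Num.max k1 k2); exists a; split => //.
      split; [apply: hk1|apply: hk2]; right; rewrite va; by rewrite le_max lexx ?orbT.
  - by split; apply: (EndP_unit hF).
  - by move=> x y [] ? ? [] ? ?; split; apply: (EndP_mul hF).
have dag : forall P, P \in unitmx ->
    seteq (dagger_set ddag (EndP v P)) (EndP v (Q P)).
  move=> P hP x; split.
  - case=> y hy ->; apply/(EndP_ddag v hBsym hBnd hdag _ hP).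
    by rewrite (ddagK hBsym hBnd hdag).
  - move=> hx; exists (ddag x); first exact/(EndP_ddag v hBsym hBnd hdag _ hP).
    by rewrite (ddagK hBsym hBnd hdag).
split; [|split].
- move=> L hL; have [P [hP e]] := hbas L hL.
  apply: (is_order_ext (O := fun s => EndP v P s /\ EndP v (Q P) s)); last exact: ord2P.
  move=> s; have := EIext _ _ e s; have := EI P hP s; tauto.
- move=> L c _ nc; exact: part2.
move=> O'; split.
- case=> L [hL eO]; have [P [hP e]] := hbas L hL.
  exists (EndP v P); split; first exact: (EndP_max hF).
  move=> s; have := eO s; have := EIext _ _ e s; have := EI P hP s; have := dag P hP s; tauto.
- case=> O [hO eO].
  have [k0 hk0] := order_bnd hF hO.1.
  have [_ [hO1 hOM]] := hO.1.
  pose L0 (x : 'cV[F]_2) := forall s, O s -> mo v 0 (s *m x).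
  have [P [hP e]] : exists P, P \in unitmx /\ seteq L0 (LP v P).
    apply: (basis hF).
    + split; [|split].
      * by move=> s _; rewrite mulmx0; exact: (mo0 v).
      * by move=> x y hx hy s hs; rewrite mulmxDr; apply: (mo_add hF); [apply: hx|apply: hy].
      * move=> a x ha hx s hs; rewrite -scalemxAr.
        by have := mo_scale hF ha (hx s hs); rewrite addr0.
    + by exists 0 => x hx; have := hx 1 hO1; rewrite mul1mx.
    + move=> x; have [kx hkx] := mo_ex v x.
      have [a [na va]] := val_ex hF (- (k0 + kx)); exists a; split => //.
      move=> s hs; rewrite -scalemxAr.
      have h2 := mo_scale hF (inP_v v a) (mo_mul hF (hk0 s hs) hkx).
      apply: (mo_le _ h2); rewrite va; lia.
  have OE : seteq O (EndP v P).
    have sub : forall s, O s -> EndP v P s.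
      move=> s hs; apply/(EndL_LP hF s hP); apply/(EndL_ext e s).
      move=> x hx t ht; rewrite mulmxA; exact: hx _ (hOM _ _ ht hs).
    move=> s; split; first exact: sub.
    exact: (hO.2 _ (EndP_order hF hP) sub).
  exists (LP v P); split; first exact: (LP_olat hF).
  move=> s.
  have d1 : dagger_set ddag O s <-> dagger_set ddag (EndP v P) s.
    split; case=> y hy ->; exists y => //; exact/OE.
  have := eO s; have := EI P hP s; have := dag P hP s; have := OE s; tauto.
Qed.
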